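(* Let $\Gamma$ be a countably infinite group acting minimally and continuously on a compact metrizable space $X$ with more than one orbit, let $x_1\in X$ have trivial stabilizer, and let $f:X\setminus\{x_1\}\to\{1,-1\}$ be continuous and not continuously extendable to $X$. Let $\pi_f:X_f\to X$ be the McMahon extension with continuous function $\tilde f:X_f\to\{1,-1\}$, and set $X_{f,+}=\tilde f^{-1}(1)$, $X_{f,-}=\tilde f^{-1}(-1)$. Then $\Gamma\curvearrowright X_f$ is null if and only if $\Gamma\curvearrowright X$ is null and the pair $(X_{f,+},X_{f,-})$ does not have arbitrarily large finite independence sets.
   Context: McMahon extension: $\Gamma\curvearrowright X_f$ is a minimal continuous action on a compact metrizable space with a $\Gamma$-equivariant continuous surjection $\pi_f:X_f\to X$ such that $\pi_f^{-1}(x)$ is a single point for $x\notin\Gamma x_1$ and two points for $x\in\Gamma x_1$, and $\tilde f$ is the continuous extension to $X_f$ of $f\circ\pi_f$ on $X_f\setminus\pi_f^{-1}(x_1)$; this extension is unique up to conjugacy (constructed as the quotient of the Stone–Čech compactification $W$ of an orbit $\Gamma x_0$, $x_0\notin\Gamma x_1$, by $w_1\sim w_2$ iff they have the same image in $X$ and $f_W(sw_1)=f_W(sw_2)$ for all $s$, $f_W$ the extension of $f$). A set $M\subseteq\Gamma$ is an independence set for $(A_1,A_2)$ if $\bigcap_{s\in F}s^{-1}A_{\omega(s)}\ne\emptyset$ for every nonempty finite $F\subseteq M$ and $\omega\in\{1,2\}^F$. Null: every sequence entropy $\limsup_n\frac1n\log N(\bigvee_{i=1}^n s_i^{-1}\mathcal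 U)$ vanishes, for all sequences $\{s_n\}\subseteq\Gamma$ and finite open covers $\mathcal U$. *)

(* Defs.v *)
From HB Require Import structures.
From mathcomp Require Import all_boot all_order all_algebra.
From mathcomp Require Import monoid.
From mathcomp Require Import all_classical all_reals all_analysis.
Set Implicit Arguments. Unset Strict Implicit. Unset Printing Implicit Defensive.
Import Order.TTheory GRing.Theory Num.Theory.
Import numFieldNormedType.Exports.
Local Open Scope classical_set_scope.
Local Open Scope ring_scope.

Definition is_action (G : groupType) (X : Type) (act : G -> X -> X) :=
  (forall x, act 1%g x = x) /\ (forall g h x, act (g * h)%g x = act g (act h x)).

Definition continuous_action (G : groupType) (X : topologicalType)
  (act : G -> X -> X) := is_action act /\ forall g, continuous (act g).

Definition act_orbit (G : groupType) (X : Type) (act : G -> X -> X) (x : X) : set X :=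
  [set act g x | g in [set: G]].

Definition minimal_action (G : groupType) (X : topologicalType)
  (act : G -> X -> X) := forall x : X, closure (act_orbit act x) = [set: X].

Definition subcover_sizes (R : realType) (T : Type) (V : set (set T)) : set R :=
  [set (size W)%:R | W in [set W : seq (set T) |
     (forall i, (i < size W)%N -> V (nth set0 W i)) /\
     (forall y, exists2 i, (i < size W)%N & nth set0 W i y)]].

Definition covnum (R : realType) (T : Type) (V : set (set T)) : R :=
  inf (@subcover_sizes R T V).

(* The join  \bigvee_{i < n} s_i^{-1} U  of the finite cover U
   (given as a finite list of sets) along the sequence s. *)
Definition join_cover (G : groupType) (T : Type) (act : G -> T -> T)
  (s : nat -> G) (U : seq (set T)) (n : nat) : set (set T) :=
  [set A | exists j : nat -> nat,
     (forall i, (i < n)%N -> (j i < size U)%N) /\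
     A = [set y | forall i, (i < n)%N -> nth set0 U (j i) (act (s i) y)]].

Definition seq_entropy (R : realType) (G : groupType) (T : Type)
  (act : G -> T -> T) (s : nat -> G) (U : seq (set T)) : \bar R :=
  limn_esup (fun n => ((ln (@covnum R T (join_cover act s U n))) / n%:R)%:E).

Definition finite_open_cover (T : topologicalType) (U : seq (set T)) :=
  (forall i, (i < size U)%N -> open (nth set0 U i)) /\
  (forall y, exists2 i, (i < size U)%N & nth set0 U i y).

Definition null_action (R : realType) (G : groupType) (T : topologicalType)
  (act : G -> T -> T) :=
  forall (s : nat -> G) (U : seq (set T)), finite_open_cover U ->
    @seq_entropy R G T act s U = 0%E.

Definition indep_set (G : groupType) (T : Type) (act : G -> T -> T)
  (A1 A2 : set T) (M : set G) :=
  forall F : set G, finite_set F -> F !=set0 -> F `<=` M ->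
    forall omega : G -> bool,
      exists y : T, forall s, F s -> (if omega s then A1 else A2) (act s y).

Definition arb_large_indep (G : groupType) (T : Type) (act : G -> T -> T)
  (A1 A2 : set T) :=
  forall n : nat, exists M : seq G,
    uniq M /\ (n <= size M)%N /\ indep_set act A1 A2 [set g | g \in M].

(* Main.v *)
Require Import Defs.
From HB Require Import structures.
From mathcomp Require Import all_boot all_order all_algebra.
From mathcomp Require Import monoid.
From mathcomp Require Import all_classical all_reals all_analysis.
From mathcomp Require Import lra zify.
Import Order.TTheory GRing.Theory Num.Theory.
Import numFieldNormedType.Exports.
Set Implicit Arguments. Unset Strict Implicit. Unset Printing Implicit Defensive.
Section Pajor.
Variable T : finType.

Definition shat (S : {set {ffun T -> bool}}) (I : {set T}) :=
  [forall w : {ffun T -> bool}, [exists f in S, [forall i in I, f i == w i]]].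

Definition Sh S := [set I | shat S I].

Lemma shat_sub (S1 S2 : {set {ffun T -> bool}}) (I : {set T}) : S1 \subset S2 -> shat S1 I -> shat S2 I.
Proof.
move=> s12 /forallP h; apply/forallP => w; have /existsP[f /andP[fS fI]] := h w.
by apply/existsP; exists f; rewrite (fintype.subsetP s12).
Qed.

Lemma pajor n : forall S : {set {ffun T -> bool}}, #|S| <= n -> #|S| <= #|Sh S|.
Proof.
elim: n => [|n IH] S.
  by rewrite leqn0 => /eqP ->.
move=> Sn.
have [S1|S2] := leqP #|S| 1.
  case: (posnP #|S|) => [->//|S0].
  have [f fS] : exists f, f \in S by apply/set0Pn; rewrite -card_gt0.
  apply: (leq_trans S1); rewrite card_gt0; apply/set0Pn; exists finset.set0.
  rewrite inE; apply/forallP => w; apply/existsP; exists f; rewrite fS /=.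
  by apply/forallP => i; rewrite inE.
have [f [g [fS gS fg]]] : exists f g, [/\ f \in S, g \in S & f != g].
  have [f fS] : exists f, f \in S by apply/set0Pn; rewrite -card_gt0 (ltn_trans _ S2).
  have : 0 < #|S :\ f| by rewrite (cardsD1 f) fS in S2.
  rewrite card_gt0 => /set0Pn[g]; rewrite !inE => /andP[gf gS].
  by exists f, g; split => //; rewrite eq_sym.
have [x fgx] : exists x, f x != g x.
  apply/existsP; apply: contraT; rewrite negb_exists => /forallP h.
  by move: fg; rewrite (_ : f = g) ?eqxx //; apply/ffunP => x; apply/eqP; have := h x; rewrite negbK.
pose S0 := [set h in S | ~~ h x]; pose S1 := [set h in S | h x].
have S01 : #|S| = #|S0| + #|S1|.
  rewrite -cardsUI (_ : S0 :&: S1 = finset.set0) ?cards0 ?addn0.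
    by apply: eq_card => h; rewrite !inE; case: (h x); rewrite ?andbT ?andbF ?orbF.
  by apply/finset.setP => h; rewrite !inE; case: (h x); rewrite ?andbF.
have lt0 : #|S0| < #|S|.
  rewrite S01 -{1}(addn0 #|S0|) ltn_add2l card_gt0; apply/set0Pn.
  case Hf: (f x); [exists f|exists g]; rewrite inE ?fS ?gS //=.
  by move: fgx; rewrite Hf; case: (g x).
have lt1 : #|S1| < #|S|.
  rewrite S01 -{1}(add0n #|S1|) ltn_add2r card_gt0; apply/set0Pn.
  case Hf: (f x); [exists g|exists f]; rewrite inE ?fS ?gS ?Hf //=.
  by move: fgx; rewrite Hf; case: (g x).
have IH0' : #|S0| <= #|Sh S0| by apply: IH; rewrite -ltnS (leq_trans lt0 Sn).
have IH1' : #|S1| <= #|Sh S1| by apply: IH; rewrite -ltnS (leq_trans lt1 Sn).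
have noX b (I : {set T}) : shat [set h in S | h x == b] I -> x \notin I.
  move=> /forallP /(_ [ffun y => ~~ b]) /existsP[h /andP[]]; rewrite inE => /andP[_ /eqP hx] /forallP /(_ x).
  by rewrite ffunE hx; case: b {hx}; case: (x \in I).
have S0E : S0 = [set h in S | h x == false].
  by apply/finset.setP => h; rewrite !inE; case: (h x).
have S1E : S1 = [set h in S | h x == true].
  by apply/finset.setP => h; rewrite !inE; case: (h x).
have noX0 I : I \in Sh S0 -> x \notin I by rewrite inE S0E; apply: noX.
pose J := (Sh S0 :|: Sh S1) :|: [set x |: I | I in Sh S0 :&: Sh S1].
have JS : J \subset Sh S.
  apply/fintype.subsetP => I; rewrite !inE => /orP[/orP[]|].
  - by apply: shat_sub; apply/fintype.subsetP => h; rewrite inE => /andP[].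
  - by apply: shat_sub; apply/fintype.subsetP => h; rewrite inE => /andP[].
  case/imsetP => I0; rewrite !inE => /andP[h0 h1] ->.
  apply/forallP => w.
  case Hw: (w x).
  - have /forallP /(_ w) /existsP[h /andP[hS /forallP hI]] := h1.
    apply/existsP; exists h; move: hS; rewrite inE => /andP[-> hx] /=.
    apply/forallP => i; rewrite !inE; case: eqP => [->|_] /=; first by rewrite hx Hw.
    exact: hI.
  - have /forallP /(_ w) /existsP[h /andP[hS /forallP hI]] := h0.
    apply/existsP; exists h; move: hS; rewrite inE => /andP[-> hx] /=.
    apply/forallP => i; rewrite !inE; case: eqP => [->|_] /=; first by move: hx; rewrite Hw; case: (h x).
    exact: hI.
have cJ : #|J| = #|Sh S0| + #|Sh S1|.
  rewrite cardsU (_ : (Sh S0 :|: Sh S1) :&: _ = finset.set0) ?cards0 ?subn0.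
    rewrite card_in_imset ?cardsUI //.
    move=> I1 I2 /setIP[/noX0 a _] /setIP[/noX0 b _] e.
    by rewrite -(setU1K a) -(setU1K b) e.
  apply/finset.setP => I; rewrite !inE; apply/negbTE; apply/negP => /andP[A /imsetP[I0 _ EI]].
  have xI : x \in I by rewrite EI setU11.
  by case/orP: A; rewrite ?S0E ?S1E => /noX; rewrite xI.
by rewrite S01 (leq_trans (leq_add IH0' IH1')) // -cJ subset_leq_card.
Qed.

Lemma small_sets_card d : #|[set I : {set T} | #|I| <= d]| <= (#|T|.+1) ^ d.
Proof.
pose F (I : {set T}) : {ffun 'I_d -> option T} :=
  [ffun k : 'I_d => nth None (map Some (enum I)) k].
have inj : {in [set I : {set T} | #|I| <= d] &, injective F}.
  move=> I1 I2; rewrite !inE => c1 c2 e.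
  have key (I : {set T}) : #|I| <= d -> I = [set i | Some i \in codom (F I)].
    move=> cI; apply/finset.setP => i; rewrite inE; apply/idP/idP.
      move=> iI; apply/codomP.
      have ii : index i (enum I) < d.
        by rewrite (leq_trans _ cI) // cardE index_mem mem_enum.
      exists (Ordinal ii); rewrite ffunE /= (nth_map i) ?nth_index ?mem_enum //.
      by rewrite index_mem mem_enum.
    case/codomP => k; rewrite ffunE.
    have [lt|ge] := ltnP k (size (enum I)).
      by rewrite (nth_map i) // => -[->]; rewrite -mem_enum mem_nth.
    by rewrite nth_default // size_map.
  by rewrite (key _ c1) (key _ c2) e.
rewrite -(card_in_imset inj) (leq_trans (max_card _)) //.
by rewrite card_ffun card_option card_ord.
Qed.

Lemma sauer_shelah (S : {set {ffun T -> bool}}) d :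
  (forall I, shat S I -> #|I| < d) -> #|S| <= (#|T|.+1) ^ d.
Proof.
move=> h; rewrite (leq_trans (pajor (leqnn _))) // (leq_trans _ (small_sets_card d)) //.
apply: subset_leq_card; apply/fintype.subsetP => I; rewrite !inE => /h.
exact: ltnW.
Qed.
End Pajor.

Local Open Scope classical_set_scope.
Local Open Scope ring_scope.

Section Cov.
Variables (R : realType) (T : Type).

End Cov.
Definition subcov (T : Type) (V : set (set T)) (W : seq (set T)) :=
 (forall i, (i < size W)%N -> V (nth set0 W i)) /\
 (forall y, exists2 i, (i < size W)%N & nth set0 W i y).

Section Cov2.
Variables (R : realType) (T : Type).
Lemma covnum_ge1 (V : set (set T)) (y0 : T) : (exists W, subcov V W) -> 1 <= covnum R V.
Proof.
move=> [W0 hW0]; apply: lb_le_inf; first by exists (size W0)%:R; exists W0.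
move=> _ [W [_ hW] <-]; have [i iW _] := hW y0.
by rewrite ler1n (leq_ltn_trans _ iW).
Qed.

Lemma join_subcov (G : groupType) (act : G -> T -> T) s (U : seq (set T)) n :
  (forall y, exists2 i, (i < size U)%N & nth set0 U i y) ->
  exists W, subcov (join_cover act s U n) W.
Proof.
move=> cU.
pose jf (h : {ffun 'I_n -> 'I_(size U)}) (i : nat) : nat :=
  oapp (fun i' : 'I_n => nat_of_ord (h i')) 0%N (insub i).
pose jset h := [set y | forall i, (i < n)%N -> nth set0 U (jf h i) (act (s i) y)].
have jfE h i (lt : (i < n)%N) : jf h i = h (Ordinal lt).
  by rewrite /jf insubT.
set e := enum {ffun 'I_n -> 'I_(size U)}.
exists (map jset e); split.
  move=> i; rewrite size_map => lt.
  case E: e lt => [//|h0 t] lt; rewrite -E in lt *.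
  rewrite (nth_map h0) //; exists (jf (nth h0 e i)).
  by split => // k kn; rewrite jfE.
move=> y.
have cU' : forall i, exists k, (k < size U)%N /\ nth set0 U k (act (s i) y).
  by move=> i; have [k ? ?] := cU (act (s i) y); exists k.
have [phi Hphi] := choice cU'.
pose h := [ffun i' : 'I_n => Ordinal (Hphi i').1].
have he : h \in e by rewrite mem_enum.
exists (index h e); first by rewrite size_map index_mem.
rewrite (nth_map h) ?index_mem // nth_index //.
by move=> i lt; rewrite jfE ffunE /=; exact: (Hphi i).2.
Qed.
End Cov2.

Lemma covnum_le (R : realType) (T1 T2 : Type) (V1 : set (set T1)) (V2 : set (set T2)) (c : R) : 0 < c -> (exists W, subcov V1 W) ->
  (forall W, subcov V1 W -> exists W', subcov V2 W' /\ (size W')%:R <= c * (size W)%:R) ->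
  covnum R V2 <= c * covnum R V1.
Proof.
move=> c0 [W0 hW0] h.
rewrite -ler_pdivrMl //; apply: lb_le_inf.
  by exists (size W0)%:R; exists W0.
move=> _ [W hW <-]; have [W' [hW' le]] := h W hW.
rewrite ler_pdivrMl //; apply: le_trans le; apply: ge_inf.
  by exists 0 => _ [? _ <-]; exact: ler0n.
by exists W'.
Qed.


Section Limsup.
Variable R : realType.
Local Open Scope ereal_scope.
Implicit Types (u : (\bar R)^nat) (l : \bar R).

Lemma limn_esupE u : limn_esup u = ereal_inf (range (esups u)).
Proof. by rewrite limn_esup_lim; apply: cvg_lim => //; exact: cvg_esups_inf. Qed.

Lemma limn_esup_ev_le u l : (exists N, forall n, (N <= n)%N -> u n <= l) -> limn_esup u <= l.
Proof.
move=> [N hN]; rewrite limn_esupE.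
apply: (@le_trans _ _ (esups u N)); first by apply: ereal_inf_lbound; exists N.
by apply: ge_ereal_sup => _ [k /= Nk <-]; exact: hN.
Qed.

Lemma limn_esup_lt_ev u l : limn_esup u < l -> exists N, forall n, (N <= n)%N -> u n < l.
Proof.
rewrite limn_esupE => /ereal_inf_lt[_ [N _ <-]] lt; exists N => n Nn.
by apply: le_lt_trans lt; apply: ereal_sup_ubound; exists n.
Qed.

Lemma limn_esup_io_ge u l : (forall N, exists2 n, (N <= n)%N & l <= u n) -> l <= limn_esup u.
Proof.
move=> h; rewrite limn_esupE; apply: le_ereal_inf_tmp => _ [N _ <-].
have [n Nn ln] := h N; apply: le_trans ln _; apply: ereal_sup_ubound; exists n => //.
Qed.

Lemma limn_esup_ge0 u : (forall n, 0 <= u n) -> 0 <= limn_esup u.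
Proof. by move=> h; apply: limn_esup_io_ge => N; exists N. Qed.

Lemma limn_esup_le u v : (forall n, u n <= v n) -> limn_esup u <= limn_esup v.
Proof.
move=> huv; rewrite !limn_esupE; apply: le_ereal_inf_tmp => _ [N _ <-].
apply: le_trans (ereal_inf_lbound _) _; first by exists N.
apply: ge_ereal_sup => _ [k /= Nk <-]; apply: le_trans (huv k) _.
by apply: ereal_sup_ubound; exists k.
Qed.
End Limsup.

Lemma ln_lt_2sqrt (R : realType) (y : R) : 0 < y -> ln y < 2 * Num.sqrt y.
Proof.
move=> y0; have sy : 0 < Num.sqrt y by rewrite sqrtr_gt0.
rewrite -{1}(sqr_sqrtr (ltW y0)) lnXn // mulr2n; have := ln_sublinear sy; lra.
Qed.

Lemma ln_poly_small (R : realType) (K d : nat) (e : R) : 0 < e ->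
  exists N, forall n, (N <= n)%N -> d%:R * ln ((K * n).+1)%:R / n%:R <= e.
Proof.
move=> e0.
pose A : R := 2 * (d.+1)%:R.
have A0 : 0 < A by rewrite /A mulr_gt0 // ltr0n.
pose dl := e / A.
have dl0 : 0 < dl by rewrite divr_gt0.
pose N := (Num.bound ((K.+1)%:R / (dl ^+ 2))).+1.
have hN : (K.+1)%:R / (dl ^+ 2) < N%:R.
  apply: lt_le_trans (archi_boundP _) _; first by rewrite divr_ge0 // exprn_ge0 // ltW.
  by rewrite ler_nat.
exists N => n Nn.
have n0 : (0 < n)%N by apply: leq_trans Nn.
have n0R : 0 < n%:R :> R by rewrite ltr0n.
have Nn' : N%:R <= n%:R :> R by rewrite ler_nat.
have key : ((K * n).+1)%:R <= (dl * n%:R) ^+ 2.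
  have h1 : (K.+1)%:R <= dl ^+ 2 * n%:R.
    rewrite -ler_pdivrMl ?exprn_gt0 // mulrC; apply: ltW; apply: lt_le_trans hN _.
    exact: Nn'.
  have h2 : ((K * n).+1)%:R <= (K.+1)%:R * n%:R :> R.
    rewrite -natrM ler_nat mulSn; rewrite -addn1 addnC leq_add2r //.
  apply: le_trans h2 _; rewrite exprMn expr2 mulrA; apply: ler_wpM2r; first exact: ltW.
  exact: h1.
have sq : Num.sqrt ((K * n).+1)%:R <= dl * n%:R.
  have := ler_sqrt ((K * n).+1)%:R (exprn_ge0 2 (mulr_ge0 (ltW dl0) (ltW n0R))).
  rewrite sqrtr_sqr ger0_norm; last exact: mulr_ge0 (ltW dl0) (ltW n0R).
  by move=> ->; exact: key.
have lnb := ln_lt_2sqrt (ltr0Sn R (K * n)).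
rewrite ler_pdivrMr //.
have dA : dl * A = e by rewrite /dl mulfVK // gt_eqF.
have dd : d%:R <= (d.+1)%:R :> R by rewrite ler_nat.
have lnge0 : 0 <= ln (((K * n).+1)%:R : R) by apply: ln_ge0; rewrite ler1n.
have sqge0 : 0 <= Num.sqrt (((K * n).+1)%:R : R) := sqrtr_ge0 _.
have d0 : 0 <= d%:R :> R by [].
rewrite -dA /A.
nra.
Qed.

Section PT.
Variables (T : topologicalType) (t0 : T).
Definition ptT : Type := T.
HB.instance Definition _ := Topological.on ptT.
HB.instance Definition _ := isPointed.Build ptT t0.
Lemma cover_of_compact (A : set T) : compact A -> cover_compact A.
Proof. move=> cA; have : @compact ptT A := cA; rewrite compact_cover; exact. Qed.
End PT.

Section Main.
Variables (R : realType) (G : groupType) (X : pseudoMetricType R).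
Hypothesis hXT2 : hausdorff_space X.
Hypothesis hXc : compact [set: X].
Variable act : G -> X -> X.
Hypothesis hact : continuous_action act.
Variable x1 : X.
Hypothesis hstab : forall g : G, act g x1 = x1 -> g = 1%g.
Variable f : X -> R.
Hypothesis hfext : ~ exists g : X -> R, continuous g /\ (forall x, g x = 1 \/ g x = -1) /\
                                (forall x, x <> x1 -> g x = f x).
Variable Xf : pseudoMetricType R.
Hypothesis hXfT2 : hausdorff_space Xf.
Hypothesis hXfc : compact [set: Xf].
Variable actf : G -> Xf -> Xf.
Hypothesis hactf : continuous_action actf.
Variable pif : Xf -> X.
Hypothesis hpic : continuous pif.
Hypothesis hpis : forall x, exists y, pif y = x.
Hypothesis hpieq : forall g y, pif (actf g y) = act g (pif y).
Hypothesis hfib1 : forall x, ~ act_orbit act x1 x -> exists y, forall y', pif y' = x <-> y' = y.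
Hypothesis hfib2 : forall x, act_orbit act x1 x ->
     exists y y', y <> y' /\ forall z, pif z = x <-> (z = y \/ z = y').
Variable ft : Xf -> R.
Hypothesis hftc : continuous ft.
Hypothesis hftval : forall y, ft y = 1 \/ ft y = -1.
Hypothesis hftext : forall y, pif y <> x1 -> ft y = f (pif y).

Lemma actfK g y : actf g^-1 (actf g y) = y.
Proof. by case: hactf => -[h1 hM] _; rewrite -hM mulVg h1. Qed.

Lemma actf_inj g : injective (actf g).
Proof. by move=> y y' e; rewrite -(actfK g y) e actfK. Qed.

Lemma actK g x : act g^-1 (act g x) = x.
Proof. by case: hact => -[h1 hM] _; rewrite -hM mulVg h1. Qed.

Lemma actfM g h y : actf (g * h)%g y = actf g (actf h y).
Proof. by case: hactf => -[_ hM] _; rewrite hM. Qed.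

Lemma cont_ftg g : continuous (ft \o actf g).
Proof. by move=> z; apply: continuous_comp; [exact: hactf.2|exact: hftc]. Qed.

Lemma open_ftg g c : open [set z | ft (actf g z) = c].
Proof.
have [->|c1] := eqVneq c 1.
  rewrite (_ : [set z | _] = (ft \o actf g) @^-1` [set x | x > 0]).
    by apply: open_comp; [move=> z _; exact: cont_ftg|exact: open_gt].
  apply/seteqP; split => z /=; first by move=> ->.
  by case: (hftval (actf g z)) => -> //; rewrite ltr0N1.
have [->|c2] := eqVneq c (-1).
  rewrite (_ : [set z | _] = (ft \o actf g) @^-1` [set x | x < 0]).
    by apply: open_comp; [move=> z _; exact: cont_ftg|exact: open_lt].
  apply/seteqP; split => z /=; first by move=> ->; rewrite ltrN10.
  by case: (hftval (actf g z)) => -> //; rewrite ltr10.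
rewrite (_ : [set z | _] = set0); first exact: open0.
apply/seteqP; split => z //= e; case: (hftval (actf g z)); rewrite e => e'.
  by move: c1; rewrite e' eqxx.
by move: c2; rewrite e' eqxx.
Qed.

Lemma closed_image (O : set Xf) : open O -> closed (pif @` ~` O).
Proof.
move=> oO; apply: compact_closed => //; apply: continuous_compact.
  exact: continuous_subspaceT.
apply: (subclosed_compact _ hXfc) => //; exact: open_closedC.
Qed.


Lemma open_ft c : open [set z | ft z = c].
Proof.
have -> : [set z | ft z = c] = [set z | ft (actf 1%g z) = c].
  by apply/funext => z /=; case: hactf => -[-> _] _.
exact: open_ftg.
Qed.

Lemma fibx1 a b z : pif a = x1 -> pif b = x1 -> a <> b -> pif z = x1 -> z = a \/ z = b.
Proof.
have o : act_orbit act x1 x1 by exists 1%g => //; case: hact => -[-> _] _.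
have [y0 [y0' [ne H]]] := hfib2 o.
move=> pa' pb' ab pz'.
have := (H a).1 pa'; have := (H b).1 pb'; have := (H z).1 pz'.
clear -ab ne; case=> E1; case=> E2; case=> E3; subst; first [by left|by right|by exfalso; apply: ab].
Qed.

Lemma fib_x1 a b : pif a = x1 -> pif b = x1 -> a <> b -> ft a <> ft b.
Proof.
move=> pa pb ab eab; apply: hfext.
have cst y y' : pif y = pif y' -> ft y = ft y'.
  move=> e; case: (pif y =P x1) => [p1|pn].
    have p1' : pif y' = x1 by rewrite -e.
    by case: (fibx1 pa pb ab p1) => ->; case: (fibx1 pa pb ab p1') => ->.
  by rewrite !hftext -?e.
have [sec hsec] := choice hpis.
exists (ft \o sec); split; [|split].
- move=> x; apply: (near_cst_continuous (ft (sec x))).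
  pose Z := pif @` ~` [set y | ft y = ft (sec x)].
  have oZ : open (~` Z) by apply: closed_openC; apply: closed_image; exact: open_ft.
  have Zx : (~` Z) x.
    by move=> [y /= ny py]; apply: ny; apply: cst; rewrite py hsec.
  apply: (filterS _ (open_nbhs_nbhs (conj oZ Zx))) => x' nZ /=.
  apply: contrapT => ne; apply: nZ; exists (sec x') => //.
- by move=> x; exact: hftval.
- by move=> x nx /=; rewrite hftext hsec.
Qed.

Lemma dist x : exists g0, forall z z', pif z = x -> pif z' = x ->
  ft (actf g0 z) = ft (actf g0 z') -> z = z'.
Proof.
case: (pselect (act_orbit act x1 x)) => [[g _ <-]|no].
  exists g^-1%g => z z' pz pz' e; apply: contrapT => ne.
  have p1 w : pif w = act g x1 -> pif (actf g^-1%g w) = x1 by move=> pw; rewrite hpieq pw actK.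
  apply: (fib_x1 (p1 _ pz) (p1 _ pz')) => // e'.
  by apply: ne; apply: (actf_inj e').
have [y hy] := hfib1 no.
by exists 1%g => z z' pz pz' _; rewrite ((hy z).1 pz) ((hy z').1 pz').
Qed.

Lemma good_nbhd (U : seq (set Xf)) : finite_open_cover U -> (0 < size U)%N ->
  forall x, exists V : set X, [/\ open V, V x & exists g0, forall c : R,
    exists m, (m < size U)%N /\ forall z, V (pif z) -> ft (actf g0 z) = c -> nth set0 U m z].
Proof.
move=> [oU cU] U0 x.
have [g0 hg0] := dist x.
have cU' : forall z, exists m, (m < size U)%N /\ nth set0 U m z.
  by move=> z; have [m ? ?] := cU z; exists m.
have [mf hmf] := choice cU'.
pose O := \bigcup_(z in [set z | pif z = x])
   (nth set0 U (mf z) `&` [set z' | ft (actf g0 z') = ft (actf g0 z)]).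
have oO : open O.
  by apply: bigcup_open => z _; apply: openI; [exact: oU (hmf z).1|exact: open_ftg].
exists (~` (pif @` ~` O)); split.
- exact: closed_openC (closed_image oO).
- by move=> [w nOw pw]; apply: nOw; exists w => //; split; [exact: (hmf w).2|].
- exists g0 => c.
  have inO z' : (~` (pif @` ~` O)) (pif z') -> O z'.
    by move=> Vz'; apply: contrapT => nO; apply: Vz'; exists z'.
  case: (pselect (exists z, pif z = x /\ ft (actf g0 z) = c)) => [[z [pz ez]]|nz].
    exists (mf z); split; first exact: (hmf z).1.
    move=> z' /inO [z'' pz'' [Uz' e'']] ez'.
    have E : z'' = z by apply: hg0 => //; rewrite -/(is_true _) -e'' /= ez' ez.
    by rewrite -E.
  exists 0%N; split => // z' /inO [z'' pz'' [_ e'']] ez'; exfalso.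
  by apply: nz; exists z''; split => //; rewrite -e'' /= ez'.
Qed.


Lemma finite_good (x0 : X) (U : seq (set Xf)) : finite_open_cover U -> (0 < size U)%N ->
  exists (D : seq X) (Vf : X -> set X) (gf : X -> G) (mf : X -> R -> nat),
  [/\ (forall x, open (Vf x)), (forall y : X, exists2 x, x \in D & Vf x y),
     (forall x c, (mf x c < size U)%N) &
     (forall x c z, Vf x (pif z) -> ft (actf (gf x) z) = c -> nth set0 U (mf x c) z)].
Proof.
move=> cU U0; have [Vf hVf] := choice (good_nbhd cU U0).
have Hg : forall x, exists g0 : G, forall c : R, exists m, (m < size U)%N /\
    forall z, Vf x (pif z) -> ft (actf g0 z) = c -> nth set0 U m z.
  by move=> x; have [_ _ [g0 h]] := hVf x; exists g0.
have [gf hgf] := choice Hg.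
have [mf' hmf] := choice (fun p : X * R => hgf p.1 p.2).
have hXc' := cover_of_compact x0 hXc.
have [] := hXc' X setT Vf.
- by move=> x _; have [] := hVf x.
- by move=> x _; exists x => //; have [] := hVf x.
move=> D' _ hD'.
exists (finmap.enum_fset D'), Vf, gf, (fun x c => mf' (x, c)); split.
- by move=> x; have [] := hVf x.
- by move=> y; have [x xD Vy] := hD' y I; exists x.
- by move=> x c; exact: (hmf (x, c)).1.
- by move=> x c z; exact: (hmf (x, c)).2.
Qed.


Lemma m11 : ((-1 : R) == 1) = false.
Proof. by apply/eqP => h; lra. Qed.

Lemma count_bound (x0 : X) (U : seq (set Xf)) (D : seq X) (Vf : X -> set X)
  (gf : X -> G) (mf : X -> R -> nat)
  (hmf : forall x c, (mf x c < size U)%N)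
  (hgood : forall x c z, Vf x (pif z) -> ft (actf (gf x) z) = c -> nth set0 U (mf x c) z)
  (hV : forall y : X, exists2 x, x \in D & Vf x y)
  (n0 : nat) (hn0 : forall M : seq G, uniq M -> (n0 <= size M)%N ->
     ~ indep_set actf (ft @^-1` [set 1]) (ft @^-1` [set -1]) [set g | g \in M])
  (s : nat -> G) (n : nat) :
  covnum R (join_cover actf s U n) <=
  ((size D * n).+1 ^ n0)%:R * covnum R (join_cover act s [seq Vf x | x <- D] n).
Proof.
set V := [seq Vf x | x <- D].
have cV : forall y, exists2 i, (i < size V)%N & nth set0 V i y.
  move=> y; have [x xD Vy] := hV y; exists (index x D).
    by rewrite size_map index_mem.
  by rewrite (nth_map x0) ?index_mem // nth_index.
pose T := undup [seq (gf x * s i)%g | x <- D, i <- iota 0 n].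
pose pat (z : Xf) : {ffun seq_sub T -> bool} := [ffun t => ft (actf (val t) z) == 1].
pose S := finset (fun p : {ffun seq_sub T -> bool} => `[< exists z, pat z = p >]).
have S0 : S = S by [].
have cS : (#|S| <= (size D * n).+1 ^ n0)%N.
  apply: leq_trans (@sauer_shelah _ S n0 _) _.
  - move=> I shI; rewrite ltnNge; apply/negP => nI.
    apply: (hn0 [seq val t | t <- enum I]).
    + by rewrite map_inj_uniq ?enum_uniq //; exact: val_inj.
    + by rewrite size_map -cardE.
    + move=> F _ _ FM omega.
      have /forallP /(_ [ffun t => omega (val t)]) /existsP [p /andP [pS /forallP pI]] := shI.
      move: pS; rewrite inE => /asboolP [z pz].
      exists z => g Fg; have := FM g Fg; rewrite /= => /mapP [t tI ->].
      have := pI t; rewrite -mem_enum tI /= -pz !ffunE => /eqP.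
      case: (omega (val t)) => /= h; rewrite /preimage /=.
        by apply/eqP; rewrite h.
      by case: (hftval (actf (val t) z)) => // e; rewrite e eqxx in h.
  - rewrite card_seq_sub ?undup_uniq //.
    have sT : (size T <= size D * n)%N.
      by rewrite (leq_trans (size_undup _)) // size_allpairs size_iota.
    elim: n0 {hn0} => // k IH; rewrite !expnS leq_mul //.
apply: covnum_le.
- by rewrite ltr0n expn_gt0.
- exact: join_subcov cV.
move=> W [hW1 hW2].
have hk : forall a, exists k : nat -> nat, (a < size W)%N ->
    (forall i, (i < n)%N -> (k i < size V)%N) /\
    nth set0 W a = [set y | forall i, (i < n)%N -> nth set0 V (k i) (act (s i) y)].
  move=> a; case: (ltnP a (size W)) => aW; last by exists id.
  by have [k [hk1 hk2]] := hW1 a aW; exists k.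
have [k hk'] := choice hk.
pose c := #|S|.
pose p0 : {ffun seq_sub T -> bool} := [ffun=> false].
pose cc (a : nat) (p : {ffun seq_sub T -> bool}) (i : nat) : R :=
  oapp (fun t : seq_sub T => if p t then 1 else -1) 1
       (insub (gf (nth x0 D (k a i)) * s i)%g).
pose jj a p i := mf (nth x0 D (k a i)) (cc a p i).
pose Dset a p := [set z | forall i, (i < n)%N -> nth set0 U (jj a p i) (actf (s i) z)].
exists (mkseq (fun j => Dset (j %/ c)%N (nth p0 (enum S) (j %% c)%N)) (size W * c)); split; [split|].
- move=> j; rewrite size_mkseq => jlt; rewrite nth_mkseq //.
  by exists (jj (j %/ c)%N (nth p0 (enum S) (j %% c)%N)); split => // i _; exact: hmf.
- move=> z; have [a aW Wa] := hW2 (pif z).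
  have pS : pat z \in S by rewrite inE; apply/asboolP; exists z.
  have ic : (index (pat z) (enum S) < c)%N by rewrite /c cardE index_mem mem_enum.
  have c0 : (0 < c)%N by apply: leq_ltn_trans ic.
  exists (a * c + index (pat z) (enum S))%N.
    rewrite size_mkseq (leq_trans (_ : _ < a * c + c)%N) ?ltn_add2l //.
    by rewrite -mulSnr leq_mul2r aW orbT.
  rewrite nth_mkseq; last first.
    rewrite (leq_trans (_ : _ < a * c + c)%N) ?ltn_add2l //.
    by rewrite -mulSnr leq_mul2r aW orbT.
  rewrite divnMDl // divn_small // addn0 modnMDl modn_small // nth_index ?mem_enum //.
  move=> i ilt; have [hk1 hk2] := hk' a aW.
  move: Wa; rewrite hk2 => /(_ i ilt) Vz.
  have kD : (k a i < size D)%N by have := hk1 i ilt; rewrite size_map.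
  apply: hgood.
    by rewrite hpieq; move: Vz; rewrite (nth_map x0).
  have Tin : (gf (nth x0 D (k a i)) * s i)%g \in T.
    rewrite mem_undup; apply/allpairsP; exists (nth x0 D (k a i), i); split => //.
      exact: mem_nth.
    by rewrite mem_iota.
  rewrite -actfM /cc insubT /= ffunE /=.
  by case: (hftval (actf (gf (nth x0 D (k a i)) * s i)%g z)) => e; rewrite e ?eqxx ?m11.
- rewrite size_mkseq mulnC natrM ler_wpM2r // ler_nat //.
Qed.


Lemma seqcover_map (x0 : X) (D : seq X) (Vf : X -> set X) :
  (forall y : X, exists2 x, x \in D & Vf x y) ->
  forall y, exists2 i, (i < size [seq Vf x | x <- D])%N & nth set0 [seq Vf x | x <- D] i y.
Proof.
move=> hV y; have [x xD Vy] := hV y; exists (index x D).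
  by rewrite size_map index_mem.
by rewrite (nth_map x0) ?index_mem // nth_index.
Qed.

Lemma back (x0 : X) : null_action R act ->
  ~ arb_large_indep actf (ft @^-1` [set 1]) (ft @^-1` [set -1]) -> null_action R actf.
Proof.
move=> nX nA s U cU.
have [y0 _] := hpis x0.
have U0 : (0 < size U)%N by have [i iU _] := cU.2 y0; apply: leq_ltn_trans iU.
have [D [Vf [gf [mf [oV hV hmf hgood]]]]] := finite_good x0 cU U0.
have [n0 hn0] : exists n0, forall M : seq G, uniq M -> (n0 <= size M)%N ->
     ~ indep_set actf (ft @^-1` [set 1]) (ft @^-1` [set -1]) [set g | g \in M].
  apply: contrapT => h; apply: nA => n; apply: contrapT => h'; apply: h; exists n.
  by move=> M uM nM iM; apply: h'; exists M.
pose V := [seq Vf x | x <- D].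
have cV : finite_open_cover V.
  split; last exact: seqcover_map.
  by move=> i; rewrite size_map => iD; rewrite (nth_map x0) //; exact: oV.
have hb := nX s V cV.
rewrite /seq_entropy; apply/eqP; rewrite eq_le; apply/andP; split; last first.
  apply: limn_esup_ge0 => n; rewrite lee_fin divr_ge0 //; apply: ln_ge0.
  by apply: (@covnum_ge1 R _ _ y0); apply: join_subcov; exact: cU.2.
apply/lee_addgt0Pr => e e0; rewrite add0e.
have e20 : 0 < e / 2 by rewrite divr_gt0.
have [N1 hN1] : exists N, forall n, (N <= n)%N ->
    (((ln (covnum R (join_cover act s V n))) / n%:R)%:E < (e / 2)%:E)%E.
  by apply: limn_esup_lt_ev; move: hb; rewrite /seq_entropy => ->; rewrite lte_fin.
have [N2 hN2] := ln_poly_small (size D) n0 e20.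
apply: limn_esup_ev_le; exists (maxn N1 N2) => n; rewrite geq_max => /andP[n1 n2].
rewrite lee_fin.
have [->|nge0] := posnP n; first by rewrite invr0 mulr0 ltW.
have nR : 0 < n%:R :> R by rewrite ltr0n.
have b := hN1 n n1; rewrite lte_fin in b.
have c := hN2 n n2.
have cnt := count_bound x0 hmf hgood hV hn0 s n.
have g1 : 1 <= covnum R (join_cover actf s U n).
  by apply: (@covnum_ge1 R _ _ y0); apply: join_subcov; exact: cU.2.
have g2 : 1 <= covnum R (join_cover act s V n).
  by apply: (@covnum_ge1 R _ _ x0); apply: join_subcov; exact: cV.2.
set Nf := covnum R (join_cover actf s U n) in g1 cnt *.
set NX := covnum R (join_cover act s V n) in g2 b cnt *.
set B : R := ((size D * n).+1 ^ n0)%:R in cnt.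
have B0 : 0 < B by rewrite /B ltr0n expn_gt0.
have lnle : ln Nf <= ln B + ln NX.
  rewrite -lnM ?posrE ?(lt_le_trans ltr01 g2) //.
  rewrite ler_ln ?posrE ?(lt_le_trans ltr01 g1) ?mulr_gt0 ?(lt_le_trans ltr01 g2) //.
have lnB : ln B = n0%:R * ln ((size D * n).+1)%:R.
  by rewrite /B natrX lnXn ?ltr0n // mulr_natl.
apply: le_trans (_ : (ln B + ln NX) / n%:R <= e).
  by rewrite ler_pM2r ?invr_gt0.
rewrite mulrDl lnB; have -> : e = e / 2 + e / 2 by rewrite -splitr.
by apply: lerD => //; apply: ltW.
Qed.


Lemma fwd_factor (x0 : X) : null_action R actf -> null_action R act.
Proof.
move=> nf s U [oU cU].
have [y0 _] := hpis x0.
pose U' := [seq pif @^-1` A | A <- U].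
have cU' : finite_open_cover U'.
  split.
    move=> i; rewrite size_map => iU; rewrite (nth_map set0) //.
    by apply: open_comp; [move=> z _; exact: hpic|exact: oU].
  move=> y; have [i iU Ui] := cU (pif y); exists i; first by rewrite size_map.
  by rewrite (nth_map set0).
have hf := nf s U' cU'.
apply/eqP; rewrite eq_le; apply/andP; split; last first.
  apply: limn_esup_ge0 => n; rewrite lee_fin divr_ge0 //; apply: ln_ge0.
  by apply: (@covnum_ge1 R _ _ x0); apply: join_subcov.
rewrite -hf; apply: limn_esup_le => n; rewrite lee_fin.
have g1 : 1 <= covnum R (join_cover act s U n).
  by apply: (@covnum_ge1 R _ _ x0); apply: join_subcov.
have le : covnum R (join_cover act s U n) <= 1 * covnum R (join_cover actf s U' n).
  apply: covnum_le => //; first exact: join_subcov cU'.2.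
  move=> W [hW1 hW2].
  have hk : forall a, exists k : nat -> nat, (a < size W)%N ->
      (forall i, (i < n)%N -> (k i < size U')%N) /\
      nth set0 W a = [set y | forall i, (i < n)%N -> nth set0 U' (k i) (actf (s i) y)].
    move=> a; case: (ltnP a (size W)) => aW; last by exists id.
    by have [k [hk1 hk2]] := hW1 a aW; exists k.
  have [k hk'] := choice hk.
  exists (mkseq (fun a => [set x | forall i, (i < n)%N -> nth set0 U (k a i) (act (s i) x)]) (size W)).
  split; last by rewrite size_mkseq mul1r.
  split.
    move=> a; rewrite size_mkseq => aW; rewrite nth_mkseq //; exists (k a); split => //.
    by move=> i ilt; have [h _] := hk' a aW; move: (h i ilt); rewrite size_map.
  move=> x; have [y py] := hpis x; have [a aW Wa] := hW2 y.
  exists a; first by rewrite size_mkseq.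
  rewrite nth_mkseq // => i ilt; have [h1 h2] := hk' a aW.
  move: Wa; rewrite h2 => /(_ i ilt); rewrite (nth_map set0) -?py /= ?hpieq //.
  by move: (h1 i ilt); rewrite size_map.
rewrite mul1r in le.
apply: ler_wpM2r; first by rewrite invr_ge0.
by rewrite ler_ln ?posrE ?(lt_le_trans ltr01 g1) ?(lt_le_trans ltr01 (le_trans g1 le)).
Qed.


Lemma join_lb (U : seq (set Xf)) (s : nat -> G) (n : nat) (K : nat) :
  (exists W, subcov (join_cover actf s U n) W) ->
  (forall W, subcov (join_cover actf s U n) W -> (K <= size W)%N) ->
  K%:R <= covnum R (join_cover actf s U n).
Proof.
move=> [W0 hW0] h; apply: lb_le_inf; first by exists (size W0)%:R; exists W0.
by move=> _ [W hW <-]; rewrite ler_nat; exact: h.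
Qed.

Lemma fwd_indep : null_action R actf ->
  ~ arb_large_indep actf (ft @^-1` [set 1]) (ft @^-1` [set -1]).
Proof.
move=> nf arb.
pose U : seq (set Xf) := [:: [set z | ft z = 1]; [set z | ft z = -1]].
have cU : finite_open_cover U.
  split; first by move=> [|[|i]] //= _; exact: open_ft.
  by move=> y; case: (hftval y) => e; [exists 0%N | exists 1%N].
have hM : forall k, exists M : seq G, [/\ uniq M, size M = (2 ^ k)%N &
    indep_set actf (ft @^-1` [set 1]) (ft @^-1` [set -1]) [set g | g \in M]].
  move=> k; have [M [uM [kM iM]]] := arb (2 ^ k)%N.
  exists (take (2 ^ k) M); split.
  - exact: take_uniq.
  - exact: size_takel.
  - move=> F fF F0 FM omega; apply: iM => //; move=> g /FM /=; exact: mem_take.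
have [Mf hMf] := choice hM.
pose tl p := trunc_log 2 p.+1.
pose s p := nth 1%g (Mf (tl p)) (p.+1 - 2 ^ tl p).
have key : forall k, ((2 ^ (2 ^ k))%N)%:R <= covnum R (join_cover actf s U (2 ^ k.+1).-1).
  move=> k; have [uM sM iM] := hMf k.
  set M := Mf k in uM sM iM.
  set n := (2 ^ k.+1).-1.
  have k0 : (0 < 2 ^ k)%N by rewrite expn_gt0.
  have posE : forall t, (t < 2 ^ k)%N -> s ((2 ^ k).-1 + t)%N = nth 1%g M t /\ ((2 ^ k).-1 + t < n)%N.
    move=> t tk.
    have e1 : ((2 ^ k).-1 + t).+1 = (2 ^ k + t)%N by rewrite -addSn prednK.
    have tlE : tl ((2 ^ k).-1 + t)%N = k.
      rewrite /tl e1; apply: trunc_log_eq => //; rewrite leq_addr /= expnS.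
      move: tk k0; set m := (2 ^ k)%N; lia.
    split; first by rewrite /s tlE e1 addKn.
    rewrite /n expnS; move: tk k0; set m := (2 ^ k)%N; lia.
  apply: join_lb; first exact: join_subcov cU.2.
  move=> W [hW1 hW2].
  pose Om := {ffun seq_sub M -> bool}.
  have hy : forall w : Om, exists y, forall t : seq_sub M,
      ft (actf (val t) y) = (if w t then 1 else -1).
    move=> w.
    have fin : finite_set [set g | g \in M] by apply/finite_seqP; exists M.
    have ne : [set g | g \in M] !=set0.
      by exists (nth 1%g M 0); apply: mem_nth; rewrite sM.
    have [y hy] := iM _ fin ne (@subset_refl _ _) (fun g => oapp w false (insub g)).
    exists y => t; have := hy (val t) (valP t); rewrite valK /=.
    by case: (w t).
  have [yf hyf] := choice hy.
  have hidx : forall w : Om, exists a, (a < size W)%N /\ nth set0 W a (yf w).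
    by move=> w; have [a ? ?] := hW2 (yf w); exists a.
  have [ix hix] := choice hidx.
  pose F (w : Om) : 'I_(size W) := Ordinal (hix w).1.
  have n1 : (1 : R) <> -1 by move/eqP; rewrite eq_sym m11.
  have n2 : (-1 : R) <> 1 by move/eqP; rewrite m11.
  have Finj : injective F.
    move=> w w' /(congr1 val) /= e; apply/ffunP => t.
    have [a1 a2] := hix w; have [b1 b2] := hix w'; rewrite -e in b2.
    have [j [hj1 hj2]] := hW1 _ a1; rewrite hj2 in a2 b2.
    have tk : (index (val t) M < 2 ^ k)%N by rewrite -sM index_mem (valP t).
    have [si ilt] := posE _ tk; rewrite (nth_index 1%g (valP t)) in si.
    have := a2 _ ilt; have := b2 _ ilt; rewrite si.
    have := hyf w t; have := hyf w' t.
    case: (j _) (hj1 _ ilt) => [|[|jj]] //= _ E' E h' h; rewrite h' in E'; rewrite h in E.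
      by move: E E'; case: (w t); case: (w' t) => //= E E'; exfalso;
        first [exact: n1 E | exact: n2 E | exact: n1 E' | exact: n2 E'].
    by move: E E'; case: (w t); case: (w' t) => //= E E'; exfalso;
        first [exact: n1 E | exact: n2 E | exact: n1 E' | exact: n2 E'].
  have := leq_card F Finj.
  by rewrite card_ffun card_bool card_seq_sub // sM card_ord.
have ln20 : 0 < ln (2 : R) by rewrite ln_gt0 // ltr1n.
have := nf s U cU; rewrite /seq_entropy => h0.
have : ((ln (2 : R) / 2)%:E <= 0)%E.
  rewrite -h0; apply: limn_esup_io_ge => N0.
  exists (2 ^ N0.+1).-1.
    rewrite expnS; have := ltn_expl N0 (ltnSn 1); set m := (2 ^ N0)%N; lia.
  rewrite lee_fin.
  set n := (2 ^ N0.+1).-1.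
  have n0 : (0 < n)%N by rewrite /n expnS; have := expn_gt0 2 N0; set m := (2 ^ N0)%N; lia.
  have nR : 0 < n%:R :> R by rewrite ltr0n.
  have kk := key N0.
  have g1 : 0 < covnum R (join_cover actf s U n).
    by apply: lt_le_trans kk; rewrite ltr0n expn_gt0.
  rewrite ler_pdivlMr //.
  have l1 : ln ((2 ^ (2 ^ N0))%N%:R : R) <= ln (covnum R (join_cover actf s U n)).
    by rewrite ler_ln ?posrE ?ltr0n ?expn_gt0.
  rewrite natrX lnXn // in l1.
  apply: le_trans l1.
  have hn : (n%:R : R) <= 2 * ((2 ^ N0)%N)%:R.
    by rewrite -natrM ler_nat /n expnS; have := expn_gt0 2 N0; set m := (2 ^ N0)%N; lia.
  rewrite -[X in _ <= X]mulr_natr mulrAC ler_pdivrMr //; have := ler_wpM2l (ltW ln20) hn; lra.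
rewrite lee_fin leNgt => /negP; apply; rewrite divr_gt0 //.
Qed.


Lemma main_iff (x0 : X) : null_action R actf <->
  (null_action R act /\ ~ arb_large_indep actf (ft @^-1` [set 1]) (ft @^-1` [set -1])).
Proof.
split => [nf|[nX nA]]; last exact: back x0 nX nA.
by split; [exact: fwd_factor x0 nf|exact: fwd_indep nf].
Qed.

End Main.

Unset Implicit Arguments. Set Strict Implicit. Set Printing Implicit Defensive.

Theorem lemma3p2
  (R : realType)
  (* a countably infinite group *)
  (G : groupType) (hG : ([set: G] #= [set: nat])%card)
  (* minimal continuous action on a compact metrizable space X *)
  (X : pseudoMetricType R) (hXT2 : hausdorff_space X) (hXc : compact [set: X])
  (act : G -> X -> X) (hact : continuous_action act) (hmin : minimal_action act)
  (* more than one orbit *)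
  (hmany : exists x y : X, ~ act_orbit act x y)
  (* x1 with trivial stabilizer *)
  (x1 : X) (hstab : forall g : G, act g x1 = x1 -> g = 1%g)
  (* f : X \ {x1} -> {1,-1} continuous, not continuously extendable *)
  (f : X -> R)
  (hfval : forall x, x <> x1 -> f x = 1 \/ f x = -1)
  (hfc : {within ~` [set x1], continuous f})
  (hfext : ~ exists g : X -> R, continuous g /\ (forall x, g x = 1 \/ g x = -1) /\
                                (forall x, x <> x1 -> g x = f x))
  (* the McMahon extension pi_f : X_f -> X with tilde f *)
  (Xf : pseudoMetricType R) (hXfT2 : hausdorff_space Xf) (hXfc : compact [set: Xf])
  (actf : G -> Xf -> Xf) (hactf : continuous_action actf) (hminf : minimal_action actf)
  (pif : Xf -> X) (hpic : continuous pif) (hpis : forall x, exists y, pif y = x)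
  (hpieq : forall g y, pif (actf g y) = act g (pif y))
  (hfib1 : forall x, ~ act_orbit act x1 x -> exists y, forall y', pif y' = x <-> y' = y)
  (hfib2 : forall x, act_orbit act x1 x ->
     exists y y', y <> y' /\ forall z, pif z = x <-> (z = y \/ z = y'))
  (ft : Xf -> R) (hftc : continuous ft) (hftval : forall y, ft y = 1 \/ ft y = -1)
  (hftext : forall y, pif y <> x1 -> ft y = f (pif y)) :
  null_action R actf <->
  (null_action R act /\
   ~ arb_large_indep actf (ft @^-1` [set 1]) (ft @^-1` [set -1])).
Proof.
by eapply main_iff; eassumption.
Qed.
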